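(* Let $n\ge2$, $\mathbb{Z}_n=\mathbb{Z}/n\mathbb{Z}$, $\mathcal{P}=\{(x_1,\dots,x_{n-1})\in\mathbb{Z}_n^{n-1}\mid x_1,\dots,x_{n-1}\text{ pairwise different}\}$ and $\mathcal{S}=\{r\in\mathbb{Z}_n^{n-1}\mid \exists\,x,y\in\mathcal{P}: r=x+y\}$. Let $\mathbf{1}=(1,\dots,1)\in\mathbb{Z}_n^{n-1}$. Then: (i) $\gamma\mathbf{1}\in\mathcal{S}$ for all $\gamma\in\mathbb{Z}_n$; (ii) if $r\in\mathcal{S}$, then every vector obtained from $r$ by permuting its $n-1$ coordinates lies in $\mathcal{S}$; (iii) if $r\in\mathcal{S}$, then $\gamma r\in\mathcal{S}$ for every unit $\gamma$ of the ring $\mathbb{Z}_n$; (iv) if $r\in\mathcal{S}$, then $r+\gamma\mathbf{1}\in\mathcal{S}$ for all $\gamma\in\mathbb{Z}_n$; (v) $\mathcal{P}\subseteq\mathcal{S}$. *)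

(* Defs.v *)
From mathcomp Require Import all_boot all_order all_algebra all_fingroup.
Set Implicit Arguments. Unset Strict Implicit. Unset Printing Implicit Defensive.
Import GRing.Theory.
Local Open Scope ring_scope.

Definition Pset (n : nat) (x : 'rV['Z_n]_(n.-1)) : Prop :=
  forall i j : 'I_(n.-1), i != j -> x 0 i != x 0 j.

Definition Sset (n : nat) (r : 'rV['Z_n]_(n.-1)) : Prop :=
  exists x y : 'rV['Z_n]_(n.-1), Pset x /\ Pset y /\ r = x + y.

Definition ones (n : nat) : 'rV['Z_n]_(n.-1) := const_mx 1.

(* Main.v *)
Require Import Defs.
From mathcomp Require Import all_boot all_order all_algebra all_fingroup.
From mathcomp Require Import zify.
Import GRing.Theory.
Local Open Scope ring_scope.

Lemma natZ_eq (n a b : nat) : (1 < n)%N -> (a%:R : 'Z_n) = b%:R -> (a %% n = b %% n)%N.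
Proof. move=> hn /(congr1 val); rewrite !Zp_nat /= Zp_cast //. Qed.

Lemma valZ (n : nat) (u : 'Z_n) : (1 < n)%N -> (val u < n)%N.
Proof. move=> hn; have e := Zp_cast hn; have h := ltn_ord u. apply: (leq_trans h); by rewrite e. Qed.

Lemma Zval (n : nat) (u : 'Z_n) : ((val u)%:R : 'Z_n) = u.
Proof. exact: natr_Zp. Qed.

Lemma mod3 (n a b : nat) : (0 < n)%N -> (a < 3 * n)%N -> (b < 3 * n)%N ->
  (a %% n = b %% n)%N -> a = b \/ a = (b + n)%N \/ b = (a + n)%N \/ a = (b + 2*n)%N \/ b = (a + 2 * n)%N.
Proof.
move=> n0 ha hb e.
have qa : (a %/ n < 3)%N by rewrite ltn_divLR.
have qb : (b %/ n < 3)%N by rewrite ltn_divLR.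
rewrite (div.divn_eq a n) (div.divn_eq b n) e.
move: qa qb; case: (a %/ n)%N => [|[|[|]]] //; case: (b %/ n)%N => [|[|[|]]] //; lia.
Qed.

Lemma mod3' (n a b : nat) : (a %% n = b %% n)%N -> (0 < n)%N -> (a < 3 * n)%N -> (b < 3 * n)%N ->
  a = b \/ a = (b + n)%N \/ b = (a + n)%N \/ a = (b + 2*n)%N \/ b = (a + 2 * n)%N.
Proof. move=> e n0 ha hb; exact: (@mod3 n a b). Qed.

Section S.
Variable n : nat.
Implicit Types x y r : 'rV['Z_n]_(n.-1).

Lemma Pset_perm x (s : 'S_(n.-1)) : Pset x -> Pset (col_perm s x).
Proof.
move=> Px i j ij; rewrite !mxE; apply: Px.
by apply: contra ij => /eqP/perm_inj ->.
Qed.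

Lemma Pset_scale x (g : 'Z_n) : g \is a GRing.unit -> Pset x -> Pset (g *: x).
Proof.
move=> gu Px i j ij; rewrite !mxE; apply: contra (Px i j ij) => /eqP e.
by apply/eqP; apply: (mulrI gu).
Qed.

Lemma Pset_shift x (g : 'Z_n) : Pset x -> Pset (x + g *: ones n).
Proof.
move=> Px i j ij; rewrite !mxE; apply: contra (Px i j ij) => /eqP e.
by apply/eqP; apply: (addIr _ e).
Qed.

Lemma Pset_neg x (g : 'Z_n) : Pset x -> Pset (g *: ones n - x).
Proof.
move=> Px i j ij; rewrite !mxE; apply: contra (Px i j ij) => /eqP e.
by apply/eqP; apply: oppr_inj; apply: (addrI _ e).
Qed.

Lemma S_perm r (s : 'S_(n.-1)) : Sset r -> Sset (col_perm s r).
Proof.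
case=> x [y [Px [Py ->]]]; exists (col_perm s x), (col_perm s y).
split; first exact: Pset_perm. split; first exact: Pset_perm.
by apply/matrixP => i j; rewrite !mxE.
Qed.

Lemma S_scale r (g : 'Z_n) : g \is a GRing.unit -> Sset r -> Sset (g *: r).
Proof.
move=> gu; case=> x [y [Px [Py ->]]]; exists (g *: x), (g *: y).
split; first exact: Pset_scale. split; first exact: Pset_scale.
by rewrite scalerDr.
Qed.

Lemma S_shift r (g : 'Z_n) : Sset r -> Sset (r + g *: ones n).
Proof.
case=> x [y [Px [Py ->]]]; exists (x + g *: ones n), y.
split; first exact: Pset_shift. split => //.
by rewrite addrAC.
Qed.

Hypothesis hn : (1 < n)%N.

Definition idv : 'rV['Z_n]_(n.-1) := \row_i (i : nat)%:R.

Lemma Pset_idv : Pset idv.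
Proof.
move=> i j ij; rewrite !mxE; apply: contra ij => /eqP/natZ_eq-/(_ hn).
rewrite !modn_small; last 2 first.
- by apply: (leq_trans (ltn_ord j)); lia.
- by apply: (leq_trans (ltn_ord i)); lia.
by move=> e; apply/eqP/val_inj.
Qed.

Lemma S_const (g : 'Z_n) : Sset (g *: ones n).
Proof.
exists idv, (g *: ones n - idv); split; first exact: Pset_idv.
split; first exact: Pset_neg Pset_idv.
by rewrite addrC subrK.
Qed.
End S.

Lemma missing (n : nat) (x : 'rV['Z_n]_(n.-1)) : (1 < n)%N -> exists m : 'Z_n, forall i, x 0 i != m.
Proof.
move=> hn.
case: (pickP (fun m : 'Z_n => [forall i, x 0 i != m])) => [m /forallP h | h]; first by exists m.
exfalso.
have sub : [set: 'Z_n] \subset [set x 0 i | i in 'I_(n.-1)].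
  apply/subsetP => m _; have := h m; move/negbT; rewrite negb_forall => /existsP [i].
  by rewrite negbK => /eqP <-; apply: imset_f.
have := leq_trans (subset_leq_card sub) (leq_imset_card _ _).
rewrite cardsT !card_ord => c.
have e := Zp_cast hn; lia.
Qed.

Lemma even_core (n k mm : nat) (t : 'I_(n.-1) -> nat) : (1 < n)%N -> n = (2 * k)%N -> (mm < n)%N ->
  (forall i, t i < n.-1)%N -> (forall i j, i != j -> t i != t j) ->
  Sset (\row_i ((t i + mm + 1)%:R : 'Z_n)).
Proof.
move=> hn nk hm ht tinj.
exists (\row_i ((if (t i < k)%N then 2 * t i else 2 * t i + 1)%N%:R : 'Z_n)).
exists (\row_i ((if (t i < k)%N then mm + 1 + n - t i else mm + n - t i)%N%:R : 'Z_n)).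
split; last split.
- move=> i j ij; rewrite !mxE; apply: contra (tinj i j ij) => /eqP /natZ_eq-/(_ hn) e.
  have hi := ht i; have hj := ht j.
  have n0 : (0 < n)%N by lia.
  move: e; case: ifP => a; case: ifP => b => e;
  (have := @mod3' _ _ _ e n0; move=> /(_ ltac:(lia)) /(_ ltac:(lia)) ?); apply/eqP; lia.
- move=> i j ij; rewrite !mxE; apply: contra (tinj i j ij) => /eqP /natZ_eq-/(_ hn) e.
  have hi := ht i; have hj := ht j.
  have n0 : (0 < n)%N by lia.
  move: e; case: ifP => a; case: ifP => b => e;
  (have := @mod3' _ _ _ e n0; move=> /(_ ltac:(lia)) /(_ ltac:(lia)) ?); apply/eqP; lia.
- apply/matrixP => i j; rewrite !mxE -natrD.
  have hj := ht j.
  have -> : ((if (t j < k)%N then 2 * t j else 2 * t j + 1) +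
     (if (t j < k)%N then mm + 1 + n - t j else mm + n - t j))%N = (t j + mm + 1 + n)%N.
    case: ifP => _; lia.
  by rewrite [X in _ = X]natrD (pchar_Zp hn) addr0.
Qed.

Lemma odd_core (n k : nat) (x : 'rV['Z_n]_(n.-1)) : (1 < n)%N -> n = (2 * k + 1)%N -> Pset x -> Sset x.
Proof.
move=> hn nk Px; set h : 'Z_n := (k + 1)%N%:R.
have hh : h + h = 1.
  rewrite /h -natrD; have -> : (k + 1 + (k + 1))%N = (n + 1)%N by lia.
  by rewrite natrD (pchar_Zp hn) add0r.
exists (h *: x), (h *: x); split; last split.
- move=> i j ij; rewrite !mxE; apply: contra (Px i j ij) => /eqP e.
  by apply/eqP; rewrite -[x 0 i]mul1r -[x 0 j]mul1r -hh !mulrDl e.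
- move=> i j ij; rewrite !mxE; apply: contra (Px i j ij) => /eqP e.
  by apply/eqP; rewrite -[x 0 i]mul1r -[x 0 j]mul1r -hh !mulrDl e.
- by rewrite -scalerDl hh scale1r.
Qed.

Lemma P_in_S (n : nat) (x : 'rV['Z_n]_(n.-1)) : (1 < n)%N -> Pset x -> Sset x.
Proof.
move=> hn Px.
have [od|ev] := boolP (odd n).
  apply: (@odd_core n n./2) => //; rewrite -[in LHS](odd_double_half n) od -mul2n; lia.
have nk : n = (2 * n./2)%N by rewrite -[in LHS](odd_double_half n) (negbTE ev) -mul2n.
have [m hm] := @missing n x hn.
set mm := val m.
have mmn : (mm < n)%N by exact: (@valZ n m hn).
pose u := fun i : 'I_(n.-1) => val (x 0 i).
pose t := fun i : 'I_(n.-1) => ((u i + (n - 1 - mm)) %% n)%N.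
have n0 : (0 < n)%N by lia.
have xv : forall i, (u i < n)%N by move=> i; exact: (@valZ n _ hn).
have xm : forall i, u i != mm.
  move=> i; apply: contra (hm i) => /eqP e; apply/eqP/val_inj; exact: e.
have ht : forall i, (t i < n.-1)%N.
  move=> i; have := ltn_pmod (u i + (n - 1 - mm)) n0; rewrite -/(t i) => lt.
  have := xm i; have := xv i; move=> h1 /eqP h2.
  rewrite ltn_neqAle -ltnS (_ : (n.-1).+1 = n) ?lt ?andbT; last lia.
  apply/eqP => e.
  have e2 : ((u i + (n - 1 - mm)) %% n = (n - 1) %% n)%N by rewrite -/(t i) e modn_small //; lia.
  have := @mod3' _ _ _ e2 n0; move=> /(_ ltac:(lia)) /(_ ltac:(lia)); lia.
have tinj : forall i j, i != j -> t i != t j.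
  move=> i j ij; apply: contra (Px i j ij) => /eqP e.
  have := xv i; have := xv j; move=> h1 h2.
  have := @mod3' _ _ _ e n0; move=> /(_ ltac:(lia)) /(_ ltac:(lia)) h.
  apply/eqP/val_inj; change (u i = u j); lia.
have -> : x = \row_i ((t i + mm + 1)%:R : 'Z_n).
  apply/matrixP => i j; rewrite !mxE (ord1 i) -(Zp_nat_mod hn (t j + mm + 1)).
  rewrite -addnA modnDml.
  have -> : (u j + (n - 1 - mm) + (mm + 1) = u j + n)%N by lia.
  by rewrite modnDr (Zp_nat_mod hn) Zval.
exact: (@even_core n n./2 mm t).
Qed.

Theorem proposition5p1 (n : nat) (hn : (1 < n)%N) :
  (forall g : 'Z_n, Sset (g *: ones n)) /\
  (forall (r : 'rV['Z_n]_(n.-1)) (s : 'S_(n.-1)), Sset r -> Sset (col_perm s r)) /\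
  (forall (r : 'rV['Z_n]_(n.-1)) (g : 'Z_n), g \is a GRing.unit -> Sset r -> Sset (g *: r)) /\
  (forall (r : 'rV['Z_n]_(n.-1)) (g : 'Z_n), Sset r -> Sset (r + g *: ones n)) /\
  (forall x : 'rV['Z_n]_(n.-1), Pset x -> Sset x).
Proof.
split; first exact: S_const.
split; first exact: S_perm.
split; first exact: S_scale.
split; first exact: S_shift.
move=> x; exact: P_in_S.
Qed.
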